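(* Let $\mathcal{M}$ be a minimally $k$-level matroid and $F$ a $k$-level flacet of $\mathcal{M}$. Then $\operatorname{rk}(F)=k-1$.
   Context: Levelness of a matroid $\mathcal{M}=(E,\mathcal{B})$: the least $k$ such that every facet-defining affine function takes at most $k$ distinct values on $V_{\mathcal{M}}=\{\mathbf{1}_B:B\in\mathcal{B}\}$ (facets are inclusion-maximal faces $\{v\in V_{\mathcal{M}}:\ell(v)=0\}\neq V_{\mathcal{M}}$ for affine $\ell\ge0$ on $V_{\mathcal{M}}$). $\mathcal{M}$ is minimally $k$-level if its levelness is $k$ and every proper minor has strictly smaller levelness. A flacet is a flat $\emptyset\neq S\subsetneq E$ such that the restriction $\mathcal{M}|_S$ and contraction $\mathcal{M}/S$ are connected; a flacet $F$ is $k$-level if $\ell_F(x)=\sum_{e\in F}x_e$ takes exactly $k$ distinct values on $V_{\mathcal{M}}$. *)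

(* Defs.v *)
From HB Require Import structures.
From mathcomp Require Import all_boot all_order all_algebra.
From mathcomp Require Import reals.
Set Implicit Arguments. Unset Strict Implicit. Unset Printing Implicit Defensive.
Import Order.TTheory GRing.Theory Num.Theory.

Section Matroids.
Variable T : finType.
Implicit Types (E C D S X Y F : {set T}) (B : {set {set T}}).

Definition is_matroid E B : Prop :=
  [/\ B != set0,
      forall X, X \in B -> X \subset E &
      forall B1 B2 : {set T}, B1 \in B -> B2 \in B -> forall x, x \in B1 :\: B2 ->
        exists2 y, y \in B2 :\: B1 & (B1 :\ x) :|: [set y] \in B].

Definition mrank B X : nat := \max_(Y in B) #|Y :&: X|.

(* ground set and bases of the minor M / C \ D (C, D disjoint subsets of E):
   X is a basis iff X ⊆ E-(C∪D), r(X ∪ C) = |X| + r(C) and r(E - D) = |X| + r(C). *)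
Definition minor_ground E C D : {set T} := E :\: (C :|: D).
Definition minor_bases E B C D : {set {set T}} :=
  [set X : {set T} | [&& X \subset minor_ground E C D,
                         mrank B (X :|: C) == #|X| + mrank B C &
                         mrank B (E :\: D) == #|X| + mrank B C]].

Definition is_minor_pair E C D : Prop :=
  [/\ C \subset E, D \subset E & [disjoint C & D]].
Definition is_proper_minor_pair E C D : Prop :=
  is_minor_pair E C D /\ C :|: D != set0.

Definition restr_ground E S := minor_ground E set0 (E :\: S).
Definition restr_bases E B S := minor_bases E B set0 (E :\: S).
Definition contr_ground E S := minor_ground E S set0.
Definition contr_bases E B S := minor_bases E B S set0.

Definition indep B X : bool := [exists Y in B, X \subset Y].
Definition circuit E B X : bool :=
  [&& X \subset E, ~~ indep B X & [forall Y : {set T}, (Y \proper X) ==> indep B Y]].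
Definition connected E B : Prop :=
  forall e f, e \in E -> f \in E -> e != f ->
    exists X, circuit E B X /\ e \in X /\ f \in X.

Definition flat E B S : Prop :=
  S \subset E /\ forall e, e \in E :\: S -> mrank B S < mrank B (e |: S).
Definition flacet E B S : Prop :=
  [/\ flat E B S, S != set0, S \proper E,
      connected (restr_ground E S) (restr_bases E B S) &
      connected (contr_ground E S) (contr_bases E B S)].

(* number of distinct values of l_F(x) = sum_{e in F} x_e on V_M *)
Definition flacet_nvalues B F : nat := size (undup [seq #|X :&: F| | X <- enum B]).

(* Affine functions l(x) = sum_e a_e x_e + b on R^E, evaluated at the
   indicator vector 1_X of a basis X (⊆ E). *)
Variable R : realType.
Definition aff_eval (a : T -> R) (b : R) X : R := (\sum_(e in X) a e + b)%R.
Definition aff_nonneg B a b : Prop := forall X, X \in B -> (0 <= aff_eval a b X)%R.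
(* zero set of l on V_M, identified with a set of bases *)
Definition zero_face B a b : {set {set T}} :=
  [set X in B | aff_eval a b X == 0%R].
Definition is_face B (G : {set {set T}}) : Prop :=
  exists a b, aff_nonneg B a b /\ G = zero_face B a b.
Definition is_facet B (G : {set {set T}}) : Prop :=
  [/\ is_face B G, G != B &
      forall H, is_face B H -> H != B -> G \subset H -> H = G].
Definition facet_defining B a b : Prop :=
  aff_nonneg B a b /\ is_facet B (zero_face B a b).
Definition aff_nvalues B a b : nat := size (undup [seq aff_eval a b X | X <- enum B]).
Definition level_bound B (k : nat) : Prop :=
  forall a b, facet_defining B a b -> aff_nvalues B a b <= k.
Definition levelness B (k : nat) : Prop :=
  level_bound B k /\ forall j, j < k -> ~ level_bound B j.
Definition minimally_level E B (k : nat) : Prop :=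
  levelness B k /\
  forall C D, is_proper_minor_pair E C D ->
    forall j, levelness (minor_bases E B C D) j -> j < k.
End Matroids.

(* Main.v *)
Require Import Defs.
From HB Require Import structures.
From mathcomp Require Import all_boot all_order all_algebra.
From mathcomp Require Import reals.
From Stdlib Require Import Classical.
From mathcomp Require Import zify ring.
Set Implicit Arguments. Unset Strict Implicit. Unset Printing Implicit Defensive.
Import Order.TTheory GRing.Theory Num.Theory.

Section Basics.
Variable T : finType.
Variable E : {set T}.
Variable B : {set {set T}}.
Hypothesis HB : is_matroid E B.

Definition swap (X : {set T}) x y := (X :\ x) :|: [set y].

Lemma in_swap X x y z : (z \in swap X x y) = (z == y) || ((z != x) && (z \in X)).
Proof. by rewrite /swap !inE orbC. Qed.

Lemma exch (B1 B2 : {set T}) x : B1 \in B -> B2 \in B -> x \in B1 -> x \notin B2 ->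
  exists2 y, (y \in B2) && (y \notin B1) & swap B1 x y \in B.
Proof.
case: HB => _ _ H h1 h2 xB1 xB2.
have := H _ _ h1 h2 x; rewrite inE xB1 xB2 => /(_ isT) [y].
by rewrite inE => /andP[a b] c; exists y => //; rewrite a b.
Qed.

Lemma card_swapI (X S : {set T}) x y : x \in X -> y \notin X ->
  #|swap X x y :&: S| + (x \in S) = #|X :&: S| + (y \in S).
Proof.
move=> xX yX.
rewrite (cardsD1 y (swap X x y :&: S)) (cardsD1 x (X :&: S)).
have -> : (swap X x y :&: S) :\ y = (X :&: S) :\ x.
  apply/setP => z; rewrite /swap !inE.
  case: (eqVneq z y) => [->|zy] /=; first by rewrite (negbTE yX) !andbF.
  by rewrite orbF andbA.
rewrite /swap !inE eqxx xX orbT /=; lia.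
Qed.

Lemma card_swap (X : {set T}) x y : x \in X -> y \notin X -> #|swap X x y| = #|X|.
Proof.
move=> xX yX; have := card_swapI [set: T] xX yX.
by rewrite !setIT !inE; lia.
Qed.

Lemma base_sub (X : {set T}) : X \in B -> X \subset E.
Proof. by case: HB => _ H _; apply: H. Qed.

Lemma bases_incomp (X Y : {set T}) : X \in B -> Y \in B -> X \subset Y -> X = Y.
Proof.
move=> hX hY sXY; apply/eqP; rewrite eqEsubset sXY /=.
apply/subsetP => y yY; apply/negPn/negP => yX.
have [z /andP[zX zY] _] := exch hY hX yY yX.
by move/subsetP: sXY => /(_ z zX); rewrite (negbTE zY).
Qed.

Lemma bases_card (X Y : {set T}) : X \in B -> Y \in B -> #|X| = #|Y|.
Proof.
move=> hX hY; move: {2}#|X :\: Y| (erefl #|X :\: Y|) => d.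
elim: d X hX => [|d IH] X hX hd.
  have sXY : X \subset Y by rewrite -setD_eq0 -cards_eq0 hd.
  by rewrite (bases_incomp hX hY sXY).
have : 0 < #|X :\: Y| by rewrite hd.
rewrite card_gt0 => /set0Pn [x]; rewrite inE => /andP[xY xX].
have [y /andP[yY yX] hX'] := exch hX hY xX xY.
rewrite -(card_swap xX yX); apply: IH => //.
have := card_swapI (~: Y) xX yX; rewrite !inE xY yY /= !setDE in hd *.
lia.
Qed.


Lemma aug_no (X Y S : {set T}) : X \in B -> Y \in B -> #|X :&: S| < #|Y :&: S| ->
  (forall y0, y0 \in Y -> y0 \notin X -> y0 \in S) ->
  exists x y, [/\ x \in X, x \notin S, y \in Y :&: S, y \notin X & swap X x y \in B].
Proof.
move=> hX hY hlt hno.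
have [x /andP[/andP[xX xY] xS]] : exists x, (x \in X) && (x \notin Y) && (x \notin S).
  apply/existsP; case: (boolP [exists x, _]) => // /existsPn hall.
  have e1 : (X :&: S) :\: Y = X :\: Y.
    apply/setP => z; rewrite !inE; have := hall z.
    by case: (z \in X); case: (z \in Y); case: (z \in S).
  have e2 : (Y :&: S) :\: X = Y :\: X.
    apply/setP => z; rewrite !inE; have := hno z.
    by case: (z \in X); case: (z \in Y); case: (z \in S) => //= ->.
  have c1 := cardsID Y (X :&: S); have c2 := cardsID X (Y :&: S).
  have c3 := cardsID Y X; have c4 := cardsID X Y.
  rewrite e1 in c1; rewrite e2 in c2.
  have e3 : X :&: S :&: Y = Y :&: S :&: X.
    by apply/setP => z; rewrite !inE; case: (z \in X); case: (z \in S); case: (z \in Y).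
  rewrite e3 in c1; rewrite setIC in c3.
  have := bases_card hX hY; lia.
have [y /andP[yY yX] hs] := exch hX hY xX xY.
by exists x, y; split => //; rewrite inE yY hno.
Qed.

Lemma aug (X Y S : {set T}) : X \in B -> Y \in B -> #|X :&: S| < #|Y :&: S| ->
  exists x y, [/\ x \in X, x \notin S, y \in Y :&: S, y \notin X & swap X x y \in B].
Proof.
move=> hX; move: {2}#|Y :\: X| (leqnn #|Y :\: X|) => d.
elim: d Y => [|d IH] Y hd hY hlt.
  apply: aug_no => // y0 y0Y y0X; move: hd; rewrite leqn0 cards_eq0 => /eqP e.
  have : y0 \in Y :\: X by rewrite inE y0Y y0X.
  by rewrite e inE.
case: (boolP [exists y0, (y0 \in Y) && (y0 \notin X) && (y0 \notin S)]); last first.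
  rewrite negb_exists => /forallP hall; apply: aug_no => // y0 y0Y y0X.
  by have := hall y0; rewrite y0Y y0X /= negbK.
move=> /existsP [y0 /andP[/andP[y0Y y0X] y0S]].
have [x0 /andP[x0X x0Y] hY'] := exch hY hX y0Y y0X.
have c1 := card_swapI S y0Y x0Y.
have c2 := card_swapI (~: X) y0Y x0Y.
rewrite !inE y0X x0X /= in c2.
have [||x [y [xX xS /setIP[yY' yS] yX hs]]] := IH (swap Y y0 x0) _ hY'.
- by rewrite setDE in hd; rewrite setDE; lia.
- by rewrite (negbTE y0S) in c1; lia.
exists x, y; split => //; rewrite inE yS andbT.
by move: yY'; rewrite in_swap; case: eqP => [e|_ /andP[]//]; rewrite e x0X in yX.
Qed.

Lemma iter (X Y S : {set T}) v : X \in B -> Y \in B ->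
  #|X :&: S| <= v <= #|Y :&: S| ->
  exists Z, [/\ Z \in B, X :&: S \subset Z, Z :\: S \subset X,
               Z \subset X :|: Y & #|Z :&: S| = v].
Proof.
move=> hX hY /andP[h1 h2]; move: {2}(v - #|X :&: S|) (erefl (v - #|X :&: S|)) => d.
elim: d X hX h1 => [|d IH] X hX h1 hd.
  exists X; split => //; rewrite ?subsetIl ?subDset ?subsetUl ?subsetUr //; lia.
have hlt : #|X :&: S| < #|Y :&: S| by lia.
have [x [y [xX xS /setIP[yY yS] yX hs]]] := aug hX hY hlt.
have c := card_swapI S xX yX; rewrite (negbTE xS) yS in c.
have [||Z [hZ s1 s2 s3 cZ]] := IH (swap X x y) hs; [lia|lia|].
exists Z; split => //.
- apply: subset_trans s1; apply/subsetP => z; rewrite /swap !inE => /andP[zX zS].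
  by rewrite zX andbT; case: eqP => // e; rewrite -e zS in xS.
- apply/subsetP => z zZS; have zS : z \notin S by move: zZS; rewrite inE => /andP[].
  move: (subsetP s2 z zZS); rewrite /swap !inE; case/orP => [/andP[_ ->]//|/eqP e].
  by rewrite e yS in zS.
- apply: (subset_trans s3); apply/subsetP => z; rewrite /swap !inE.
  case/orP => [/orP[/andP[_ ->]//|/eqP->]|->]; by rewrite ?yY ?orbT.
Qed.

End Basics.

Section Rank.
Variable T : finType.
Variables (E : {set T}) (B : {set {set T}}).
Hypothesis HB : is_matroid E B.
Variable n : nat.
Hypothesis Hn : forall X, X \in B -> #|X| = n.

Lemma B_nonempty : exists X, X \in B.
Proof. by case: HB => /set0Pn. Qed.

Lemma mrank_ge (Y S : {set T}) : Y \in B -> #|Y :&: S| <= mrank B S.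
Proof. by move=> hY; rewrite /mrank; apply: (@leq_bigmax_cond _ (mem B) (fun Y => #|Y :&: S|) _ hY). Qed.

Lemma mrank_ex (S : {set T}) : exists2 Y, Y \in B & mrank B S = #|Y :&: S|.
Proof.
have [X hX] := B_nonempty.
have h : 0 < #|B| by apply/card_gt0P; exists X.
by have [Y hY e] := eq_bigmax_cond (fun Y => #|Y :&: S|) h; exists Y.
Qed.

Lemma mrank_le (S : {set T}) : mrank B S <= #|S|.
Proof. by apply/bigmax_leqP => Y _; apply: subset_leq_card; apply: subsetIr. Qed.

Lemma mrank_len (S : {set T}) : mrank B S <= n.
Proof.
apply/bigmax_leqP => Y hY; rewrite -(Hn hY).
by apply: subset_leq_card; apply: subsetIl.
Qed.

Lemma rank_full (S : {set T}) : #|S| <= mrank B S -> exists2 Y, Y \in B & S \subset Y.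
Proof.
move=> h; have [Y hY e] := mrank_ex S; exists Y => //.
have : Y :&: S == S by rewrite eqEcard subsetIr -e h.
by move/eqP <-; rewrite subsetIl.
Qed.

Lemma mrankE : mrank B E = n.
Proof.
apply/eqP; rewrite eqn_leq mrank_len /=.
have [X hX] := B_nonempty.
have := mrank_ge E hX; rewrite (setIidPl (base_sub HB hX)) (Hn hX) //.
Qed.

Lemma mrank0 : mrank B set0 = 0.
Proof. by apply/eqP; rewrite -leqn0; have := mrank_le set0; rewrite cards0. Qed.

End Rank.

Section GF.
Variable T : finType.
Variables (E : {set T}) (B : {set {set T}}).
Hypothesis HB : is_matroid E B.
Variable n : nat.
Hypothesis Hn : forall X, X \in B -> #|X| = n.
Variable F : {set T}.

Definition G := [set X in B | #|X :&: F| == mrank B F].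

Lemma inGP X : reflect (X \in B /\ #|X :&: F| = mrank B F) (X \in G).
Proof. by rewrite inE; apply: (iffP andP) => -[a /eqP b]. Qed.

Lemma G_ex : exists X, X \in G.
Proof. by have [Y hY e] := mrank_ex HB F; exists Y; apply/inGP. Qed.

Lemma inG_le X Y : X \in B -> Y \in G -> #|Y :&: F| <= #|X :&: F| -> X \in G.
Proof.
move=> hX /inGP[hY eY] le; apply/inGP; split => //.
by apply/eqP; rewrite eqn_leq mrank_ge // -eY.
Qed.

Lemma inG_sub X Y : X \in B -> Y \in G -> Y :&: F \subset X -> X \in G.
Proof.
move=> hX hY s; apply: (inG_le hX hY); apply: subset_leq_card.
by rewrite subsetI s subsetIr.
Qed.

Lemma gsum Y1 Y2 : Y1 \in G -> Y2 \in G -> (Y1 :&: F) :|: (Y2 :\: F) \in G.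
Proof.
move=> h1; set I1 := Y1 :&: F.
have [hB1 cI1] := inGP _ h1.
move: {2}(#|I1| - #|Y2 :&: I1|) (erefl (#|I1| - #|Y2 :&: I1|)) => d.
elim: d Y2 => [|d IH] Y2 hd h2; have [hB2 c2] := inGP _ h2.
  have e : Y2 :&: I1 = I1.
    by apply/eqP; rewrite eqEcard subsetIr; lia.
  have sI : I1 \subset Y2 :&: F.
    by rewrite subsetI -{1}e subsetIl subsetIr.
  have e' : I1 = Y2 :&: F by apply/eqP; rewrite eqEcard sI /= c2 cI1.
  by rewrite e' setID.
have e1 : Y1 :&: I1 = I1 by rewrite /I1 setIA setIid.
have hlt : #|Y2 :&: I1| < #|Y1 :&: I1| by rewrite e1; lia.
have [x [y [xY2 xI /setIP[yY1 yI] yY2 hs]]] := aug HB hB2 hB1 hlt.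
have yF : y \in F by move: yI; rewrite inE => /andP[].
have cF := card_swapI F xY2 yY2.
have xF : x \in F.
  apply/negPn/negP => xF; rewrite (negbTE xF) yF in cF.
  by have := mrank_ge F hs; lia.
rewrite xF yF in cF.
have cI := card_swapI I1 xY2 yY2; rewrite (negbTE xI) yI in cI.
have hsG : swap Y2 x y \in G by apply/inGP; split => //; lia.
have := IH (swap Y2 x y) _ hsG; rewrite -/I1.
have -> : swap Y2 x y :\: F = Y2 :\: F.
  apply/setP => z; rewrite /swap !inE; case: (eqVneq z y) => [->|zy].
    by rewrite yF.
  by rewrite orbF; case: eqP => [->|_]; rewrite ?xF /=.
move=> H; apply: H; move: cI hd; rewrite addn0 addn1; clear; lia.
Qed.


Lemma fc (C X : {set T}) e e' : e != e' -> e \in C -> e' \in C ->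
  ~ (exists2 Y, Y \in G & C \subset Y) ->
  (exists2 Y, Y \in G & C :\ e \subset Y) ->
  X \in G -> C :\ e' \subset X ->
  (C \subset F \/ [disjoint C & F]) ->
  [/\ e \in X, e' \notin X & swap X e e' \in G].
Proof.
move=> ee' eC e'C notC [Z0 hZ0 sZ0] hX sX hCF.
have eX : e \in X by apply: (subsetP sX); rewrite !inE eC ee'.
have e'X : e' \notin X.
  apply/negP => e'X; apply: notC; exists X => //.
  apply/subsetP => z zC; case: (eqVneq z e') => [->//|ze'].
  by apply: (subsetP sX); rewrite !inE ze' zC.
split => //.
have [hXB cX] := inGP _ hX.
have [Z1 [hZ1 sZ1 hZ1b]] : exists Z1, [/\ Z1 \in G, C :\ e \subset Z1 &
      (X :&: F \subset Z1) \/ ((X :\: F \subset Z1) /\ e' \in F)].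
  case: hCF => hCF.
    exists ((Z0 :&: F) :|: (X :\: F)); split.
    - exact: gsum.
    - apply/subsetP => z zC; rewrite !inE (subsetP sZ0 _ zC).
      by move: zC; rewrite inE => /andP[_ /(subsetP hCF) ->].
    - by right; split; [exact: subsetUr | exact: (subsetP hCF)].
  exists ((X :&: F) :|: (Z0 :\: F)); split.
  - exact: gsum.
  - apply/subsetP => z zC; rewrite !inE (subsetP sZ0 _ zC).
    move: zC; rewrite inE => /andP[_ zC].
    by move: hCF; rewrite disjoint_subset => /subsetP /(_ z zC); rewrite inE => ->; rewrite orbT.
  - by left; exact: subsetUl.
have [hZ1B cZ1] := inGP _ hZ1.
set S := X :|: [set e'].
have cXS : #|X :&: S| = n by rewrite (setIidPl (subsetUl _ _)) (Hn hXB).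
have hv : #|Z1 :&: S| <= #|X :&: S| <= #|X :&: S|.
  by rewrite leqnn andbT cXS -(Hn hZ1B); apply: subset_leq_card; apply: subsetIl.
have [Z [hZ s1 s2 s3 cZ]] := iter HB hZ1B hXB hv.
have ZS : Z \subset S.
  have : Z :&: S == Z by rewrite eqEcard subsetIl cZ cXS (Hn hZ) leqnn.
  by move/eqP <-; rewrite subsetIr.
have sCZ : C :\ e \subset Z.
  apply: subset_trans s1; rewrite subsetI sZ1 /=.
  apply/subsetP => z; rewrite inE => /andP[ze zC].
  rewrite /S !inE; case: (eqVneq z e') => [_|ze']; rewrite ?orbT //.
  by rewrite (subsetP sX) //= !inE ze' zC.
have hZG : Z \in G.
  case: hZ1b => [sXF|[sXF e'F]].
    apply: (inG_sub hZ hX); apply: subset_trans s1; rewrite subsetI sXF.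
    by apply: subset_trans (subsetUl _ _); apply: subsetIl.
  apply: (inG_le hZ hX).
  have c1 := cardsID F Z; have c2 := cardsID F X.
  have : #|Z :\: F| <= #|X :\: F|.
    apply: subset_leq_card; apply/subsetP => z; rewrite !inE => /andP[zF zZ].
    rewrite zF /=; move: (subsetP ZS z zZ); rewrite /S !inE; case/orP => // /eqP ze'.
    by rewrite ze' e'F in zF.
  rewrite (Hn hZ) in c1; rewrite (Hn hXB) in c2; move=> h; move: c1 c2 h; clear; lia.
have eZ : e \notin Z.
  apply/negP => eZ; apply: notC; exists Z => //.
  apply/subsetP => z zC; case: (eqVneq z e) => [->//|ze].
  by apply: (subsetP sCZ); rewrite !inE ze zC.
have -> : swap X e e' = Z; last by [].
apply/eqP; rewrite eq_sym eqEcard (Hn hZ) card_swap // (Hn hXB) leqnn andbT.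
apply/subsetP => z zZ; rewrite /swap !inE.
move: (subsetP ZS z zZ); rewrite /S !inE; case/orP => [->|->]; rewrite ?orbT //.
by rewrite andbT; apply/orP; left; apply/eqP => ze; rewrite -ze zZ in eZ.
Qed.

End GF.

Section Facet.
Variable R : realType.
Variable T : finType.
Local Open Scope ring_scope.

Lemma sum_const_on (a : T -> R) (A : {set T}) :
  (forall e e', e \in A -> e' \in A -> a e = a e') ->
  exists al, forall Y : {set T}, Y \subset A -> \sum_(e in Y) a e = #|Y|%:R * al.
Proof.
move=> h; case: (set_0Vmem A) => [->|[e0 e0A]].
  by exists 0 => Y; rewrite subset0 => /eqP ->; rewrite big_set0 cards0 mul0r.
exists (a e0) => Y sY; rewrite mulr_natl -sumr_const; apply: eq_bigr => e eY.
by apply: h => //; apply: (subsetP sY).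
Qed.

Variables (B' : {set {set T}}) (F' A2 : {set T}) (n' r' : nat).

Definition a0 (e : T) : R := if e \in F' then -1 else 0.

Lemma aff0E X : aff_eval a0 r'%:R X = r'%:R - #|X :&: F'|%:R.
Proof.
rewrite /aff_eval addrC; congr (_ + _).
rewrite /a0 -big_mkcondr /= (eq_bigl (fun e => e \in X :&: F')); last by move=> e; rewrite inE.
by rewrite sumr_const mulNrn.
Qed.

Hypothesis H1 : forall X, X \in B' -> X :\: F' \subset A2.
Hypothesis H2 : forall X, X \in B' -> #|X| = n'.
Hypothesis H4 : exists2 X, X \in B' & #|X :&: F'| = r'.

Lemma lin_rel (a : T -> R) (b : R) :
  (forall e e', e \in F' -> e' \in F' -> a e = a e') ->
  (forall e e', e \in A2 -> e' \in A2 -> a e = a e') ->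
  (forall X, X \in B' -> #|X :&: F'| = r' -> aff_eval a b X = 0) ->
  exists c, forall X, X \in B' -> aff_eval a b X = (r'%:R - #|X :&: F'|%:R) * c.
Proof.
move=> h1 h2 h0.
have [al hal] := sum_const_on h1; have [be hbe] := sum_const_on h2.
have eq : forall X, X \in B' -> aff_eval a b X =
    #|X :&: F'|%:R * al + (n'%:R - #|X :&: F'|%:R) * be + b.
  move=> X hX; rewrite /aff_eval (big_setID F') /= hal ?subsetIr // hbe ?H1 //.
  have c := cardsID F' X; rewrite (H2 hX) in c; rewrite -c natrD; ring.
have [X4 hX4 c4] := H4.
have z := h0 _ hX4 c4; rewrite eq // c4 in z.
exists (be - al) => X hX; rewrite eq //.
by apply/eqP; rewrite -subr_eq0; apply/eqP; rewrite -z; ring.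
Qed.

Hypothesis H3 : forall X, X \in B' -> (#|X :&: F'| <= r')%N.
Hypothesis H5 : exists2 X, X \in B' & (#|X :&: F'| < r')%N.
Hypothesis H6 : forall (a : T -> R) (b : R), (forall X, X \in B' -> #|X :&: F'| = r' -> aff_eval a b X = 0) ->
   (forall e e', e \in F' -> e' \in F' -> a e = a e') /\
   (forall e e', e \in A2 -> e' \in A2 -> a e = a e').

Lemma facet_main : facet_defining B' a0 r'%:R.
Proof.
have nn : aff_nonneg B' a0 r'%:R by move=> X hX; rewrite aff0E subr_ge0 ler_nat H3.
split => //; split.
- by exists a0, r'%:R.
- have [X5 h5 c5] := H5; apply/eqP => e.
  have : X5 \in zero_face B' a0 r'%:R by rewrite e.
  rewrite inE h5 aff0E subr_eq0 eqr_nat => /eqP; lia.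
- move=> H [a [b [hn ->]]] hne hsub.
  have h0 : forall X, X \in B' -> #|X :&: F'| = r' -> aff_eval a b X = 0.
    move=> X hX c; have : X \in zero_face B' a0 r'%:R by rewrite inE hX aff0E c subrr eqxx.
    by move/(subsetP hsub); rewrite inE hX => /eqP.
  have [k1 k2] := H6 h0.
  have [c hc] := lin_rel k1 k2 h0.
  have c0 : c != 0.
    apply/eqP => c0; move/eqP: hne; apply; apply/setP => X; rewrite inE.
    by case: (boolP (X \in B')) => //= hX; rewrite hc // c0 mulr0 eqxx.
  apply/setP => X; rewrite !inE; case: (boolP (X \in B')) => //= hX.
  by rewrite hc // aff0E mulf_eq0 (negbTE c0) orbF.
Qed.

Lemma nvalues0 : aff_nvalues B' a0 r'%:R = size (undup [seq #|X :&: F'| | X <- enum B']).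
Proof.
rewrite /aff_nvalues.
have -> : [seq aff_eval a0 r'%:R X | X <- enum B'] =
    map (fun m : nat => r'%:R - m%:R) [seq #|X :&: F'| | X <- enum B'].
  by rewrite -map_comp; apply: eq_map => X; rewrite aff0E.
rewrite undup_map_inj ?size_map // => x y /= /addrI /oppr_inj /eqP.
by rewrite eqr_nat => /eqP.
Qed.

End Facet.

Section Level.
Variable R : realType.
Variable T : finType.
Local Open Scope ring_scope.
Variable B' : {set {set T}}.

Lemma level_card : level_bound R B' #|B'|.
Proof.
move=> a b _; rewrite /aff_nvalues; apply: leq_trans (size_undup _) _.
by rewrite size_map cardE.
Qed.

Lemma exists_levelness : exists j, levelness R B' j.
Proof.
suff : forall m, level_bound R B' m -> exists j, levelness R B' j.
  by apply; apply: level_card.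
elim/ltn_ind => m IH hm.
case: (classic (exists j, (j < m)%N /\ level_bound R B' j)) => [[j [jm hj]]|hno].
  exact: IH hj.
exists m; split => // j jm hj; apply: hno; by exists j.
Qed.

Lemma zero_face_sub (a : T -> R) b : zero_face B' a b \subset B'.
Proof. by apply/subsetP => X; rewrite inE => /andP[]. Qed.

Lemma facet_exists : B' != set0 -> exists (a : T -> R) b, facet_defining B' a b.
Proof.
move=> hne.
suff : forall d (H : {set {set T}}), (#|B'| - #|H| <= d)%N -> is_face R B' H -> H != B' ->
    exists (a : T -> R) b, facet_defining B' a b.
  move=> h; apply: (h #|B'| set0); first by apply: leq_subr.
    exists (fun _ => 0), 1; split.
      by move=> X _; rewrite /aff_eval big1 // add0r ler01.
    apply/setP => X; rewrite !inE /aff_eval big1 // add0r oner_eq0 andbF //.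
  by apply: contraNneq hne => <-.
elim => [|d IH] H hd hf hn.
  have sH : H \subset B' by case: hf => a [b [_ ->]]; apply: zero_face_sub.
  exfalso; move/negP: hn; apply; rewrite eqEcard sH /= -subn_eq0 -leqn0; exact: hd.
case: (classic (exists H2, [/\ is_face R B' H2, H2 != B', H \subset H2 & H2 != H])).
  move=> [H2 [f2 n2 s2 ne2]]; apply: (IH H2) => //.
  have sH2 : H2 \subset B' by case: f2 => a [b [_ ->]]; apply: zero_face_sub.
  have : H \proper H2 by rewrite properEneq s2 eq_sym ne2.
  move/proper_card; have := subset_leq_card sH2; lia.
move=> hno; have [a [b [nn eH]]] := hf; exists a, b; split => //.
rewrite -eH; split => // H2 f2 n2 s2; apply: NNPP => ne; apply: hno.
by exists H2; split => //; apply/eqP.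
Qed.

Lemma levelness_ge1 j : B' != set0 -> levelness R B' j -> (1 <= j)%N.
Proof.
move=> hne [lb _]; have [a [b hf]] := facet_exists hne.
apply: leq_trans (lb a b hf); rewrite /aff_nvalues lt0n size_eq0.
have [X hX] := set0Pn _ hne; apply/eqP => e.
have : aff_eval a b X \in undup [seq aff_eval a b X | X <- enum B'].
  by rewrite mem_undup; apply: map_f; rewrite mem_enum.
by rewrite e.
Qed.
End Level.

Section Minors.
Variable T : finType.
Variables (E : {set T}) (B : {set {set T}}).
Hypothesis HB : is_matroid E B.
Variable n : nat.
Hypothesis Hn : forall X, X \in B -> #|X| = n.
Variable F : {set T}.
Hypothesis HFE : F \subset E.

Lemma EDDF : E :\: (E :\: F) = F.
Proof. by rewrite setDDr setDv set0U; apply/setIidPr. Qed.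

Lemma indep_restr (C : {set T}) : C \subset F ->
  indep (restr_bases E B F) C <-> exists2 Y, Y \in G B F & C \subset Y.
Proof.
move=> CF; split.
  move=> /existsP [Y' /andP[hY' sCY']]; move: hY'.
  rewrite /restr_bases /minor_bases /minor_ground inE set0U EDDF setU0 mrank0 // addn0.
  case/and3P => Y'F /eqP r1 /eqP r2.
  have [Z hZ sZ] := rank_full HB (eq_leq (esym r1)).
  exists Z; last exact: subset_trans sZ.
  apply/inGP; split => //; apply/eqP; rewrite eqn_leq mrank_ge // r2.
  by apply: subset_leq_card; rewrite subsetI sZ.
move=> [Y hY sCY]; have /inGP [hYB cY] := hY.
apply/existsP; exists (Y :&: F); rewrite subsetI sCY CF andbT.
rewrite /restr_bases /minor_bases /minor_ground inE set0U EDDF setU0 mrank0 // addn0.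
rewrite subsetIr cY eqxx andbT /=.
rewrite andbT -cY eqn_leq mrank_le /=.
by have := mrank_ge (Y :&: F) hYB; rewrite setIA setIid.
Qed.

Lemma indep_contr (C : {set T}) : C \subset E :\: F ->
  indep (contr_bases E B F) C <-> exists2 Y, Y \in G B F & C \subset Y.
Proof.
move=> CF; split.
  move=> /existsP [X' /andP[hX' sCX']]; move: hX'.
  rewrite /contr_bases /minor_bases /minor_ground inE setU0 setD0 (mrankE HB Hn).
  case/and3P => X'F /eqP r1 /eqP r2.
  have [Z hZ eZ] := mrank_ex HB (X' :|: F).
  have c1 : #|Z :&: (X' :|: F)| <= #|Z :&: X'| + #|Z :&: F|.
    by rewrite setIUr; apply: leq_card_setU.
  have c2 : #|Z :&: X'| <= #|X'| by apply: subset_leq_card; apply: subsetIr.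
  have c3 := mrank_ge F hZ.
  have e1 : #|Z :&: X'| = #|X'| by lia.
  exists Z; last first.
    apply: subset_trans sCX' _.
    have : Z :&: X' == X' by rewrite eqEcard subsetIr e1 leqnn.
    by move/eqP <-; rewrite subsetIl.
  by apply/inGP; split => //; lia.
move=> [Y hY sCY]; have /inGP [hYB cY] := hY.
apply/existsP; exists (Y :\: F).
have sCYF : C \subset Y :\: F.
  apply/subsetP => z zC; rewrite inE (subsetP sCY _ zC) andbT.
  by move: (subsetP CF _ zC); rewrite inE => /andP[].
rewrite sCYF andbT.
rewrite /contr_bases /minor_bases /minor_ground inE setU0 setD0 (mrankE HB Hn).
have c := cardsID F Y; rewrite (Hn hYB) in c.
apply/and3P; split.
- exact: setSD (base_sub HB hYB).
- have sY : Y \subset Y :\: F :|: F.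
    by apply/subsetP => z zY; rewrite !inE zY; case: (z \in F).
  have := mrank_ge (Y :\: F :|: F) hYB; rewrite (setIidPl sY) (Hn hYB).
  have := mrank_len Hn (Y :\: F :|: F); move=> h1 h2.
  apply/eqP; move: h1 h2 c cY; clear; lia.
- apply/eqP; move: c cY; clear; lia.
Qed.


Lemma mrank_base X : X \in B -> mrank B X = n.
Proof.
move=> hX; apply/eqP; rewrite eqn_leq (mrank_len Hn) /=.
by have := mrank_ge X hX; rewrite setIid (Hn hX).
Qed.

Lemma del_bases f W : W \in B -> f \notin W ->
  minor_bases E B set0 [set f] = [set X in B | f \notin X].
Proof.
move=> hW fW.
have rEf : mrank B (E :\: [set f]) = n.
  apply/eqP; rewrite eqn_leq (mrank_len Hn) /=.
  have sW : W \subset E :\: [set f].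
    apply/subsetP => z zW; rewrite !inE (subsetP (base_sub HB hW) _ zW) andbT.
    by apply/eqP => e; move: fW; rewrite -e zW.
  by have := mrank_ge (E :\: [set f]) hW; rewrite (setIidPl sW) (Hn hW).
apply/setP => X; rewrite /minor_bases /minor_ground !inE set0U setU0 mrank0 // addn0 rEf.
apply/idP/idP.
  case/and3P => sX /eqP r1 /eqP r2.
  have [Y hY sXY] := rank_full HB (eq_leq (esym r1)).
  have eXY : X = Y by apply/eqP; rewrite eqEcard sXY (Hn hY) r2 leqnn.
  rewrite -eXY in hY; rewrite hY /=.
  by apply/negP => fX; move: (subsetP sX _ fX); rewrite !inE eqxx.
case/andP => hX fX; apply/and3P; split.
- apply/subsetP => z zX; rewrite !inE (subsetP (base_sub HB hX) _ zX) andbT.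
  by apply/eqP => e; move: fX; rewrite -e zX.
- by rewrite (mrank_base hX) (Hn hX).
- by rewrite (Hn hX).
Qed.

Lemma con_in f W X : W \in B -> f \in W -> X \in minor_bases E B [set f] set0 ->
  f \notin X /\ f |: X \in B.
Proof.
move=> hW fW; rewrite /minor_bases /minor_ground !inE setU0 setD0 (mrankE HB Hn).
have r1 : mrank B [set f] = 1.
  apply/eqP; rewrite eqn_leq (leq_trans (mrank_le _ _)) ?cards1 //=.
  by have := mrank_ge [set f] hW; rewrite (setIidPr _) ?sub1set // cards1.
rewrite r1; case/and3P => sX /eqP r2 /eqP r3.
have fX : f \notin X by apply/negP => fX; move: (subsetP sX _ fX); rewrite !inE eqxx.
split => //.
have cU : #|f |: X| = #|X| + 1 by rewrite cardsU1 fX addnC.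
have hr : #|f |: X| <= mrank B (f |: X) by rewrite cU setUC r2.
have [Y hY sXY] := rank_full HB hr.
have eXY : f |: X = Y by apply/eqP; rewrite eqEcard sXY (Hn hY) cU r3 leqnn.
by rewrite eXY.
Qed.

Lemma con_of f X : X \in B -> f \in X -> X :\ f \in minor_bases E B [set f] set0.
Proof.
move=> hX fX; rewrite /minor_bases /minor_ground !inE setU0 setD0 (mrankE HB Hn).
have r1 : mrank B [set f] = 1.
  apply/eqP; rewrite eqn_leq (leq_trans (mrank_le _ _)) ?cards1 //=.
  by have := mrank_ge [set f] hX; rewrite (setIidPr _) ?sub1set // cards1.
have cX := cardsD1 f X; rewrite fX (Hn hX) in cX.
have cX' : #|X :\ f| + 1 = n by rewrite cX addn1.
rewrite r1 setUC setD1K // (mrank_base hX) cX' eqxx andbT.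
rewrite andbT; apply/subsetP => z; rewrite !inE => /andP[zf zX].
by rewrite zf (subsetP (base_sub HB hX) _ zX).
Qed.

End Minors.

Lemma count_eq (s : seq nat) lo hi : lo <= hi ->
  (forall v, (v \in s) = (lo <= v <= hi)) -> size (undup s) = hi - lo + 1.
Proof.
move=> lh hs.
have p : perm_eq (undup s) (iota lo (hi - lo + 1)).
  apply: uniq_perm; rewrite ?undup_uniq ?iota_uniq // => v.
  rewrite mem_undup mem_iota hs; apply/idP/idP => /andP[h1 h2]; apply/andP; split => //; lia.
by rewrite (perm_size p) size_iota.
Qed.

Lemma count_ge (s : seq nat) lo hi : lo <= hi ->
  (forall v, lo <= v <= hi -> v \in s) -> hi - lo + 1 <= size (undup s).
Proof.
move=> lh hs; rewrite -(size_iota lo (hi - lo + 1)); apply: uniq_leq_size; first exact: iota_uniq.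
move=> v; rewrite mem_iota mem_undup => /andP[h1 h2]; apply: hs; apply/andP; split => //; lia.
Qed.

Section Aff.
Variable R : realType.
Variable T : finType.
Local Open Scope ring_scope.

Lemma aff_swap (a : T -> R) b (X : {set T}) e e' : e \in X -> e' \notin X ->
  aff_eval a b (swap X e e') = aff_eval a b X - a e + a e'.
Proof.
move=> eX e'X; have h : e' \notin X :\ e by rewrite !inE (negbTE e'X) andbF.
rewrite /aff_eval /swap setUC (big_setU1 _ h) /= (big_setD1 e eX) /=; ring.
Qed.

Lemma aff_swap_eq (a : T -> R) b (X : {set T}) e e' : e \in X -> e' \notin X ->
  aff_eval a b X = 0 -> aff_eval a b (swap X e e') = 0 -> a e = a e'.
Proof.
move=> eX e'X h1; rewrite aff_swap // h1 => /eqP; rewrite sub0r addrC subr_eq0 eq_sym.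
by move/eqP.
Qed.
End Aff.

Section MainEx.
Variable T : finType.
Variables (E : {set T}) (B : {set {set T}}).
Hypothesis HB : is_matroid E B.
Variable n : nat.
Hypothesis Hn : forall X, X \in B -> #|X| = n.
Variable F : {set T}.
Hypothesis HFE : F \subset E.
Hypothesis Hrc : connected (restr_ground E F) (restr_bases E B F).
Hypothesis Hcc : connected (contr_ground E F) (contr_bases E B F).

Definition gind (C : {set T}) := exists2 Y, Y \in G B F & C \subset Y.

Lemma restr_circ C : circuit (restr_ground E F) (restr_bases E B F) C ->
  [/\ C \subset F, ~ gind C & forall x, x \in C -> gind (C :\ x)].
Proof.
rewrite /circuit /restr_ground /minor_ground set0U (EDDF HFE).
case/and3P => CF nind /forallP hall; split => //.
- move=> hg; move/negP: nind; apply; exact/(indep_restr HB HFE CF).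
- move=> x xC; have := hall (C :\ x); rewrite properD1 //= => hind.
  exact/(indep_restr HB HFE (subset_trans (subsetDl C [set x]) CF)).
Qed.

Lemma contr_circ C : circuit (contr_ground E F) (contr_bases E B F) C ->
  [/\ C \subset E :\: F, ~ gind C & forall x, x \in C -> gind (C :\ x)].
Proof.
rewrite /circuit /contr_ground /minor_ground setU0.
case/and3P => CF nind /forallP hall; split => //.
- move=> hg; move/negP: nind; apply; exact/(indep_contr HB Hn HFE CF).
- move=> x xC; have := hall (C :\ x); rewrite properD1 //= => hind.
  exact/(indep_contr HB Hn HFE (subset_trans (subsetDl C [set x]) CF)).
Qed.

Lemma ex_EF x y Q : Q \in G B F -> x \in E :\: F -> y \in E :\: F -> x != y ->
  exists X, [/\ X \in G B F, X :&: F = Q :&: F, x \in X, y \notin X & swap X x y \in G B F].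
Proof.
move=> hQ xE yE xy.
have g : forall z, z \in E :\: F -> z \in contr_ground E F.
  by move=> z; rewrite /contr_ground /minor_ground setU0.
have [C [hC [xC yC]]] := Hcc (g _ xE) (g _ yE) xy.
have [CF nC hsub] := contr_circ hC.
have [X1 hX1 sX1] := hsub y yC.
set X := (Q :&: F) :|: (X1 :\: F).
have hX : X \in G B F by rewrite /X; exact: (gsum HB hQ hX1).
have sCX : C :\ y \subset X.
  apply/subsetP => z zC; rewrite !inE (subsetP sX1 _ zC) andbT.
  move: zC; rewrite inE => /andP[_ /(subsetP CF)]; rewrite inE => /andP[-> _].
  by rewrite orbT.
have dCF : [disjoint C & F].
  rewrite disjoints_subset; apply: subset_trans CF _.
  by apply/subsetP => z; rewrite !inE => /andP[].
have [xX yX hs] := fc HB Hn xy xC yC nC (hsub x xC) hX sCX (or_intror dCF).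
exists X; split => //.
by apply/setP => z; rewrite !inE; case: (z \in Q); case: (z \in F); case: (z \in X1).
Qed.

Variable f : T.
Hypothesis fF : f \in F.

Lemma cardIF1 (Z : {set T}) : #|Z :&: F| = (f \in Z) + #|Z :&: (F :\ f)|.
Proof.
rewrite (cardsD1 f (Z :&: F)) !inE fF andbT; congr (_ + _); apply: eq_card => z.
by rewrite !inE; case: (z \in Z); case: (z \in F); case: (z == f).
Qed.

Definition D1 x y := exists C, [/\ circuit (restr_ground E F) (restr_bases E B F) C,
  x \in C, y \in C & f \notin C].
Definition D2 x y := exists C, [/\ circuit (restr_ground E F) (restr_bases E B F) C,
  x \in C, y \in C & f \in C].

Lemma D12 x y : x \in F -> y \in F -> x != y -> D1 x y \/ D2 x y.
Proof.
move=> xF yF xy.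
have g : forall z, z \in F -> z \in restr_ground E F.
  by move=> z; rewrite /restr_ground /minor_ground set0U (EDDF HFE).
have [C [hC [xC yC]]] := Hrc (g _ xF) (g _ yF) xy.
case: (boolP (f \in C)) => fC; [right|left]; by exists C.
Qed.

Lemma ex_D1 x y W : W \in G B F -> f \notin W -> x != y -> D1 x y ->
  exists X, [/\ X \in G B F, f \notin X, x \in X, y \notin X & swap X x y \in G B F].
Proof.
move=> hW fW xy [C [hC xC yC fC]].
have [CF nC hsub] := restr_circ hC.
have [X1 hX1 sX1] := hsub y yC.
have /inGP [hX1B cX1] := hX1; have /inGP [hWB cW] := hW.
have cWf : #|W :&: (F :\ f)| = mrank B F by rewrite -cW cardIF1 (negbTE fW).
have hv : #|X1 :&: (F :\ f)| <= mrank B F <= #|W :&: (F :\ f)|.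
  by rewrite cWf leqnn andbT -cX1 cardIF1 leq_addl.
have [Z [hZ s1 _ _ cZ]] := iter HB hX1B hWB hv.
have fZ : f \notin Z.
  apply/negP => fZ; have := mrank_ge F hZ; rewrite cardIF1 fZ cZ /=.
  by rewrite add1n ltnn.
have hZG : Z \in G B F by apply/inGP; split => //; rewrite cardIF1 (negbTE fZ) cZ.
have sCZ : C :\ y \subset Z.
  apply: subset_trans s1; rewrite subsetI sX1 /=.
  apply/subsetP => z; rewrite !inE => /andP[_ zC]; rewrite (subsetP CF _ zC) andbT.
  by apply/eqP => e; move: fC; rewrite -e zC.
have [xZ yZ hs] := fc HB Hn xy xC yC nC (hsub x xC) hZG sCZ (or_introl CF).
by exists Z; split.
Qed.

Lemma ex_D2 x y : x != y -> y != f -> D2 x y ->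
  exists X, [/\ X \in G B F, f \in X, x \in X, y \notin X & swap X x y \in G B F].
Proof.
move=> xy yf [C [hC xC yC fC]].
have [CF nC hsub] := restr_circ hC.
have [X1 hX1 sX1] := hsub y yC.
have fX1 : f \in X1 by apply: (subsetP sX1); rewrite !inE fC eq_sym yf.
have [xX yX hs] := fc HB Hn xy xC yC nC (hsub x xC) hX1 sX1 (or_introl CF).
by exists X1; split.
Qed.

End MainEx.

Section Final.
Variable R : realType.
Variable T : finType.
Variables (E : {set T}) (B : {set {set T}}).
Hypothesis HB : is_matroid E B.
Variable n : nat.
Hypothesis Hn : forall X, X \in B -> #|X| = n.
Variable F : {set T}.
Hypothesis HFE : F \subset E.
Hypothesis Hrc : connected (restr_ground E F) (restr_bases E B F).
Hypothesis Hcc : connected (contr_ground E F) (contr_bases E B F).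
Variable k : nat.
Hypothesis Hmin : minimally_level R E B k.
Variable X0 : {set T}.
Hypothesis hX0 : X0 \in B.
Hypothesis hmin : forall X, X \in B -> #|X0 :&: F| <= #|X :&: F|.
Hypothesis kE : k = mrank B F - #|X0 :&: F| + 1.
Hypothesis k2 : 2 <= k.
Variable f : T.
Hypothesis fF : f \in F.
Hypothesis fX0 : f \in X0.
Variable W : {set T}.
Hypothesis hW : W \in G B F.
Hypothesis fW : f \notin W.

Lemma lorF : #|X0 :&: F| <= mrank B F.
Proof. exact: mrank_ge. Qed.

Lemma lo_lt : #|X0 :&: F| < mrank B F.
Proof. move: k2 kE lorF; clear; lia. Qed.

Lemma minor_contra B' C D : is_proper_minor_pair E C D -> minor_bases E B C D = B' ->
  (exists (a : T -> R) b, facet_defining B' a b /\ k <= aff_nvalues B' a b) -> False.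
Proof.
move=> Hp eB [a [b [hf hk]]]; have [j hj] := exists_levelness R B'.
have := Hmin.2 _ _ Hp j; rewrite eB => /(_ hj) jk; have := hj.1 a b hf.
move: hk jk; clear; lia.
Qed.

Lemma swapD1 (X : {set T}) x y : x != f -> y != f -> (swap X x y) :\ f = swap (X :\ f) x y.
Proof.
move=> xf yf; apply/setP => z; rewrite /swap !inE.
case: (eqVneq z f) => [->|zf] /=; last by [].
by rewrite andbF eq_sym (negbTE yf).
Qed.

Lemma cardIF0 (X : {set T}) : f \notin X -> #|X :&: (F :\ f)| = #|X :&: F|.
Proof. by move=> fX; rewrite (cardIF1 fF X) (negbTE fX). Qed.

Definition P1prop := forall a : T -> R,
  (forall x y, x \in F :\ f -> y \in F :\ f -> x != y -> D1 E B F f x y -> a x = a y) ->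
  forall x y, x \in F :\ f -> y \in F :\ f -> a x = a y.

Lemma del_false : P1prop -> False.
Proof.
move=> P1h.
have /inGP [hWB cW] := hW.
set B' := [set X in B | f \notin X].
have vals : forall v, #|X0 :&: F| <= v <= mrank B F ->
    exists X, [/\ X \in B, f \notin X & #|X :&: F| = v].
  move=> v /andP[h1 h2].
  have c1 := cardsID F W; have c2 := cardsID F X0.
  rewrite setDE (Hn hWB) cW in c1; rewrite setDE (Hn hX0) in c2.
  have rn := mrank_len Hn F.
  have hv : #|W :&: ~: F| <= n - v <= #|X0 :&: ~: F|.
    apply/andP; split; move: c1 c2 rn h1 h2; clear; lia.
  have [Z [hZ _ s2 _ cZ]] := iter HB hWB hX0 hv.
  exists Z; split => //.
    apply/negP => fZ; move: fW; rewrite (subsetP s2) //.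
    by rewrite setDE setCK inE fZ fF.
  have c3 := cardsID F Z; rewrite setDE (Hn hZ) cZ in c3.
  move: c3 rn h1 h2 c1; clear; lia.
apply: (@minor_contra B' set0 [set f]).
- split; [split|].
  + exact: sub0set.
  + by rewrite sub1set (subsetP HFE).
  + by rewrite -setI_eq0 set0I.
  + by rewrite set0U; apply/set0Pn; exists f; rewrite inE.
- by rewrite /B'; exact: (del_bases HB Hn hWB fW).
exists (a0 R (F :\ f)), ((mrank B F)%:R)%R; split.
  apply: (@facet_main R T B' (F :\ f) (E :\: F) n (mrank B F)).
  - move=> X; rewrite inE => /andP[hX fX]; apply/subsetP => z; rewrite !inE.
    case/andP => /negP zF zX; rewrite (subsetP (base_sub HB hX) _ zX) andbT.
    apply/negP => zF'; apply: zF; rewrite zF' andbT.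
    by apply/eqP => e; move: fX; rewrite -e zX.
  - by move=> X; rewrite inE => /andP[hX _]; apply: Hn.
  - by exists W; [rewrite inE hWB fW | rewrite cardIF0].
  - move=> X; rewrite inE => /andP[hX fX].
    by rewrite cardIF0 // mrank_ge.
  - have [X [hX fX cX]] : exists X, [/\ X \in B, f \notin X & #|X :&: F| = #|X0 :&: F|].
      by apply: vals; rewrite leqnn lorF.
    exists X; first by rewrite inE hX fX.
    by rewrite cardIF0 // cX lo_lt.
  - move=> a b hz.
    have hz' : forall X, X \in G B F -> f \notin X -> aff_eval a b X = 0%R.
      move=> X /inGP [hXB cX] fX; apply: hz; first by rewrite inE hXB fX.
      by rewrite cardIF0.
    split.
    + apply: P1h => x y xF yF xy hd.
      have xF' : x \in F by move: xF; rewrite inE => /andP[].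
      have [X [hX fX xX yX hs]] := ex_D1 HB Hn HFE fF hW fW xy hd.
      apply: (aff_swap_eq xX yX (hz' _ hX fX) (hz' _ hs _)).
      rewrite in_swap negb_or (negbTE fX) andbF andbT.
      by move: yF; rewrite !inE eq_sym => /andP[].
    + move=> e e' eA e'A; case: (eqVneq e e') => [->//|ee'].
      have [X [hX eXF eX e'X hs]] := ex_EF HB Hn HFE Hcc hW eA e'A ee'.
      have fX : f \notin X.
        apply/negP => fX; move: fW; have : f \in X :&: F by rewrite inE fX fF.
        by rewrite eXF inE => /andP[->].
      apply: (aff_swap_eq eX e'X (hz' _ hX fX) (hz' _ hs _)).
      rewrite in_swap negb_or (negbTE fX) andbF andbT.
      by apply/eqP => e1; move: e'A; rewrite -e1 inE fF.
rewrite nvalues0 kE; apply: count_ge lorF _ => v hv.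
have [X [hX fX cX]] := vals _ hv.
apply/mapP; exists X; first by rewrite mem_enum inE hX fX.
by rewrite cardIF0.
Qed.


Lemma cardU1F (X : {set T}) : #|(f |: X) :&: F| = #|X :&: (F :\ f)| + 1.
Proof.
rewrite (cardIF1 fF) !inE eqxx /= addnC; congr (_ + _); apply: eq_card => z.
by rewrite !inE; case: (z == f); case: (z \in X); case: (z \in F).
Qed.

Lemma con_false : ~ P1prop -> False.
Proof.
move=> nP1.
have [Y hY] := G_ex HB F; have /inGP [hYB cY] := hY.
have vals : forall v, #|X0 :&: F| <= v <= mrank B F ->
    exists Z, [/\ Z \in B, f \in Z & #|Z :&: F| = v].
  move=> v hv; rewrite -cY in hv.
  have [Z [hZ s1 _ _ cZ]] := iter HB hX0 hYB hv.
  exists Z; split => //; apply: (subsetP s1); by rewrite inE fX0 fF.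
have [Wf [hWfB fWf cWf]] : exists Z, [/\ Z \in B, f \in Z & #|Z :&: F| = mrank B F].
  by apply: vals; rewrite lorF leqnn.
have hWf : Wf \in G B F by apply/inGP.
have cardD1F : forall Z : {set T}, f \in Z -> #|(Z :\ f) :&: (F :\ f)| + 1 = #|Z :&: F|.
  by move=> Z fZ; rewrite -{2}(setD1K fZ) cardU1F.
have lo1 : 1 <= #|X0 :&: F| by apply/card_gt0P; exists f; rewrite inE fX0 fF.
have hci := con_in HB Hn hX0 fX0.
apply: (@minor_contra (minor_bases E B [set f] set0) [set f] set0) => //.
  split; [split|].
  + by rewrite sub1set (subsetP HFE).
  + exact: sub0set.
  + by rewrite -setI_eq0 setI0.
  + by rewrite setU0; apply/set0Pn; exists f; rewrite inE.
exists (a0 R (F :\ f)), ((mrank B F - 1)%:R)%R; split.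
  apply: (@facet_main R T _ (F :\ f) (E :\: F) (n - 1) (mrank B F - 1)).
  - move=> X hX; have [fX hU] := hci _ hX; apply/subsetP => z; rewrite !inE.
    case/andP => /negP zF zX.
    rewrite (subsetP (base_sub HB hU)) ?inE ?zX ?orbT // andbT.
    apply/negP => zF'; apply: zF; rewrite zF' andbT.
    by apply/eqP => e; move: fX; rewrite -e zX.
  - move=> X hX; have [fX hU] := hci _ hX; have := Hn hU; rewrite cardsU1 fX /= => <-.
    by rewrite subn1.
  - exists (Wf :\ f); first refine (con_of HB Hn hWfB fWf).
    by move: (cardD1F _ fWf); rewrite cWf; clear; lia.
  - move=> X hX; have [fX hU] := hci _ hX; have := mrank_ge F hU; rewrite cardU1F.
    by clear; lia.
  - exists (X0 :\ f); first refine (con_of HB Hn hX0 fX0).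
    by move: (cardD1F _ fX0) lo_lt lo1; clear; lia.
  - move=> a b hz.
    have hz' : forall X, X \in G B F -> f \in X -> aff_eval a b (X :\ f) = 0%R.
      move=> X /inGP[hXB cX] fX; apply: hz; first refine (con_of HB Hn hXB fX).
      by move: (cardD1F _ fX); rewrite cX; clear; lia.
    have hD2 : forall x y, x \in F :\ f -> y \in F :\ f -> x != y -> D2 E B F f x y -> a x = a y.
      move=> x y xF yF xy hd.
      have yf : y != f by move: yF; rewrite !inE => /andP[].
      have xf : x != f by move: xF; rewrite !inE => /andP[].
      have [X [hX fX xX yX hs]] := ex_D2 HB Hn HFE xy yf hd.
      have fs : f \in swap X x y by rewrite in_swap eq_sym (negbTE yf) /= eq_sym xf fX.
      apply: (aff_swap_eq (X := X :\ f) (e := x) (e' := y)).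
      + by rewrite !inE xf xX.
      + by rewrite !inE (negbTE yX) andbF.
      + exact: hz'.
      + by rewrite -swapD1 // hz'.
    have [a1 h1 [u [v [uF vF uv]]]] : exists2 a1 : T -> R,
        (forall x y, x \in F :\ f -> y \in F :\ f -> x != y -> D1 E B F f x y -> a1 x = a1 y) &
        exists u v, [/\ u \in F :\ f, v \in F :\ f & a1 u <> a1 v].
      apply: NNPP => hn; apply: nP1 => a1 h1 u v uF vF; apply: NNPP => ne; apply: hn.
      by exists a1 => //; exists u, v; split.
    have key : forall p q, p \in F :\ f -> q \in F :\ f -> a1 p <> a1 q -> a p = a q.
      move=> p q pF qF ne.
      have pq : p != q by apply/eqP => e; apply: ne; rewrite e.
      have pF' : p \in F by move: pF; rewrite inE => /andP[].
      have qF' : q \in F by move: qF; rewrite inE => /andP[].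
      case: (D12 HFE Hrc f pF' qF' pq) => hd; last exact: hD2.
      by exfalso; apply: ne; apply: h1.
    have main : forall x, x \in F :\ f -> a x = a u.
      move=> x xF; case: (eqVneq (a1 x) (a1 u)) => [e1|/eqP ne]; last exact: key.
      have e2 : a x = a v by apply: key => // e3; apply: uv; rewrite -e1 e3.
      by rewrite e2 (key u v uF vF uv).
    split.
    + by move=> x y xF yF; rewrite (main x xF) (main y yF).
    + move=> e e' eA e'A; case: (eqVneq e e') => [->//|ee'].
      have [X [hX eXF eX e'X hs]] := ex_EF HB Hn HFE Hcc hWf eA e'A ee'.
      have fX : f \in X.
        have : f \in Wf :&: F by rewrite inE fWf fF.
        by rewrite -eXF inE => /andP[].
      have ef : e != f by apply/eqP => e1; move: eA; rewrite e1 inE fF.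
      have e'f : e' != f by apply/eqP => e1; move: e'A; rewrite e1 inE fF.
      have fs : f \in swap X e e' by rewrite in_swap eq_sym (negbTE e'f) /= eq_sym ef fX.
      apply: (aff_swap_eq (X := X :\ f) (e := e) (e' := e')).
      * by rewrite !inE ef eX.
      * by rewrite !inE (negbTE e'X) andbF.
      * exact: hz'.
      * by rewrite -swapD1 // hz'.
rewrite nvalues0.
have -> : k = (mrank B F - 1) - (#|X0 :&: F| - 1) + 1 by move: kE lo1 lorF; clear; lia.
apply: count_ge; first by move: lorF; clear; lia.
move=> w /andP[hw1 hw2]; have hv : #|X0 :&: F| <= w + 1 <= mrank B F.
  by apply/andP; split; move: hw1 hw2 lo1 lorF; clear; lia.
have [Z [hZ fZ cZ]] := vals _ hv.
apply/mapP; exists (Z :\ f); first by rewrite mem_enum; refine (con_of HB Hn hZ fZ).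
by move: (cardD1F _ fZ); rewrite cZ; clear; lia.
Qed.

End Final.

Unset Implicit Arguments.
Theorem proposition6p6 (R : realType) (T : finType) (E : {set T})
    (B : {set {set T}}) (k : nat) (F : {set T}) :
  is_matroid E B ->
  minimally_level R E B k ->
  flacet E B F ->
  flacet_nvalues B F = k ->
  mrank B F = (k - 1)%N.
Proof.
move=> HB Hmin Hfl Hk.
have [X_ hX_] := B_nonempty HB.
pose n := #|X_|.
have Hn : forall X, X \in B -> #|X| = n by move=> X hX; rewrite /n; refine (bases_card HB hX hX_).
case: Hfl => [[HFE _] Fne Fprop Hrc Hcc].
case: (@arg_minnP _ X_ (fun X => X \in B) (fun X => #|X :&: F|) hX_) => X0 hX0 hmin.
have [Y hY] := G_ex HB F.
have lorF : #|X0 :&: F| <= mrank B F by apply: mrank_ge.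
have vals : forall v, (v \in [seq #|X :&: F| | X <- enum B]) = (#|X0 :&: F| <= v <= mrank B F).
  move=> v; apply/mapP/idP.
  - by case=> X; rewrite mem_enum => hX ->; rewrite hmin // mrank_ge.
  - move=> hv; have /inGP [hYB cY] := hY; rewrite -cY in hv.
    have [Z [hZ _ _ _ cZ]] := iter HB hX0 hYB hv.
    by exists Z; [rewrite mem_enum | rewrite cZ].
have kE : k = mrank B F - #|X0 :&: F| + 1 by rewrite -Hk; apply: count_eq.
have k2 : 2 <= k.
  have hne : minor_bases E B E set0 != set0.
    apply/set0Pn; exists set0; rewrite inE sub0set set0U setD0 cards0 add0n !eqxx.
    by [].
  have [x xF] := set0Pn _ Fne.
  have Hp : is_proper_minor_pair E E set0.
    split; [split|].
    + exact: subxx.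
    + exact: sub0set.
    + by rewrite -setI_eq0 setI0.
    + by rewrite setU0; apply/set0Pn; exists x; apply: (subsetP HFE).
  have [j hj] := exists_levelness R (minor_bases E B E set0).
  have := Hmin.2 _ _ Hp j hj; have := levelness_ge1 hne hj; clear; lia.
rewrite kE.
case: (posnP #|X0 :&: F|) => [->|lo_pos]; first by rewrite subn0 addnK.
exfalso.
have /card_gt0P [f] := lo_pos; rewrite inE => /andP[fX0 fF].
have [e eF ef] : exists2 e, e \in F & e != f.
  apply: NNPP => h.
  have sF : F \subset [set f].
    apply/subsetP => z zF; rewrite inE; apply/negPn/negP => zf; apply: h; by exists z.
  have c1 := subset_leq_card sF; rewrite cards1 in c1.
  have c2 : mrank B F <= #|F| by apply: mrank_le.
  move: kE k2 lo_pos c1 c2 lorF; clear; lia.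
have g : forall z, z \in F -> z \in restr_ground E F.
  by move=> z; rewrite /restr_ground /minor_ground set0U (EDDF HFE).
have [C [hC [eC fC]]] := Hrc e f (g _ eF) (g _ fF) ef.
have [CF nC hsub] := restr_circ HB HFE hC.
have [W hW sW] := hsub f fC.
have fW : f \notin W.
  apply/negP => fW; apply: nC; exists W => //; apply/subsetP => z zC.
  case: (eqVneq z f) => [->//|zf]; apply: (subsetP sW); by rewrite !inE zf zC.
case: (classic (P1prop R E B F f)) => hP.
- exact: (del_false HB Hn HFE Hcc Hmin hX0 kE k2 fF hW fW hP).
- exact: (con_false HB Hn HFE Hrc Hcc Hmin hX0 kE k2 fF fX0 hP).
Qed.
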